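(* For every $n>2$ and every $c\geq1$, $$\rho_{n,(1,1,c)}=\frac{n-2}{n}\cdot\frac{1}{1-(2/n)^c}.$$
   Context: Let $X$ be a finite alphabet with $n\geq 2$ letters and $X^*$ the set of words over $X$; $|v|$ is the length of a word $v$. A code over $X$ is a finite sequence $C=(v_1,\ldots,v_m)$ of words over $X$ such that every $w\in X^*$ has at most one factorization into code-words: if $w=v_{i_1}\cdots v_{i_l}=v_{j_1}\cdots v_{j_{l'}}$ with $l,l'\geq1$, then $l=l'$ and $i_t=j_t$ for all $t$. (Codes are sequences, not sets.) A code $C=(v_1,\ldots,v_m)$ is a prefix code if for all $i,j$, $v_i$ is a prefix of $v_j$ if and only if $i=j$. For a finite sequence $L=(a_1,\ldots,a_m)$ of positive integers, $UD_n(L)$ is the set of all codes $(v_1,\ldots,v_m)$ over an $n$-letter alphabet with $|v_i|=a_i$ for all $i$, $PR_n(L)\subseteq UD_n(L)$ is the subset of prefix codes, and $\rho_{n,L}=|PR_n(L)|/|UD_n(L)|$. *)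

(* Defs.v *)
From mathcomp Require Import all_boot all_order all_algebra.
From mathcomp Require Import boolp.

Set Implicit Arguments.
Unset Strict Implicit.
Unset Printing Implicit Defensive.

Import GRing.Theory Num.Theory.

(* The word v_{i_1} ... v_{i_l} for an index sequence s = (i_1,...,i_l)
   (indices are 0-based). *)
Definition concat_idx (n : nat) (C : seq (seq 'I_n)) (s : seq nat) : seq 'I_n :=
  flatten [seq nth [::] C i | i <- s].

Definition is_code (n : nat) (C : seq (seq 'I_n)) : Prop :=
  forall s t : seq nat,
    s != [::] -> t != [::] ->
    all (fun i => i < size C) s -> all (fun i => i < size C) t ->
    concat_idx C s = concat_idx C t -> s = t.

Definition is_prefix_code (n : nat) (C : seq (seq 'I_n)) : Prop :=
  is_code C /\
  forall i j, i < size C -> j < size C ->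
    (prefix (nth [::] C i) (nth [::] C j) <-> i = j).

(* Sequences of words (v_1,...,v_m) with |v_i| = a_i, for L = (a_1,...,a_m):
   the finite type of dependent tuples. *)
Definition wordseq_type (n : nat) (L : seq nat) :=
  {dffun forall i : 'I_(size L), (nth 0 L i).-tuple 'I_n}.

Definition seq_of (n : nat) (L : seq nat) (f : wordseq_type n L) : seq (seq 'I_n) :=
  [seq tval (f i) | i <- enum 'I_(size L)].

Definition UD (n : nat) (L : seq nat) : {set wordseq_type n L} :=
  [set f | `[< is_code (seq_of f) >]].

Definition PR (n : nat) (L : seq nat) : {set wordseq_type n L} :=
  [set f | `[< is_prefix_code (seq_of f) >]].

Definition rho (n : nat) (L : seq nat) : rat :=
  (#|PR n L|%:R / #|UD n L|%:R)%R.

(* Main.v *)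
Require Import Defs.
From mathcomp Require Import all_boot all_order all_algebra.
From mathcomp Require boolp.
From mathcomp Require Import ring.

Section Code.
Variables (n : nat) (a b : 'I_n) (w : seq 'I_n).
Let C := [:: [:: a]; [:: b]; w].
Let F := fun x : 'I_n => (x != a) && (x != b).

Lemma concat_cons i s : concat_idx C (i :: s) = nth [::] C i ++ concat_idx C s.
Proof. by []. Qed.

Lemma concat_nil : concat_idx C [::] = [::].
Proof. by []. Qed.

Lemma catl_inj (u s t : seq 'I_n) : u ++ s = u ++ t -> s = t.
Proof. by elim: u => //= x u IH [] /IH. Qed.

Hypothesis wne : w != [::].
Hypothesis ab : a != b.
Hypothesis hw : has F w.

Lemma L1 (t : seq nat) : all (fun i => i < 3) t -> has F (concat_idx C t) ->
  find F w <= find F (concat_idx C t).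
Proof.
elim: t => [|i t IH] //= /andP[hi ht]; rewrite concat_cons.
case: i hi => [|[|[|i]]] // _ /=.
- rewrite /F eqxx /= => h. by apply: leqW; apply: IH.
- rewrite /F eqxx andbF /= => h. by apply: leqW; apply: IH.
- by rewrite find_cat hw.
Qed.

Lemma nomix x s t : ~~ F x -> all (fun i => i < 3) s ->
  x :: concat_idx C s = w ++ concat_idx C t -> False.
Proof.
move=> hx hs e.
have := congr1 (find F) e; rewrite find_cat hw /= (negbTE hx).
have hh : has F (x :: concat_idx C s) by rewrite e has_cat hw.
move: hh; rewrite /= (negbTE hx) /= => hh.
move=> h2; have h1 := @L1 s hs hh. by rewrite -h2 ltnn in h1.
Qed.

Lemma nonempty_piece i : i < 3 -> nth [::] C i != [::].
Proof. by case: i => [|[|[|i]]]. Qed.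


Lemma uniq_dec s t : all (fun i => i < 3) s -> all (fun i => i < 3) t ->
  concat_idx C s = concat_idx C t -> s = t.
Proof.
elim: s t => [|i s IH] [|j t] //=.
- move=> _ /andP[hj _]; rewrite concat_nil concat_cons => e.
  by move: (nonempty_piece _ hj); case: (nth [::] C j) e.
- move=> /andP[hi _] _; rewrite concat_nil concat_cons => e.
  by move: (nonempty_piece _ hi); case: (nth [::] C i) e.
move=> /andP[hi hs] /andP[hj ht]; rewrite !concat_cons.
have nFa : ~~ F a by rewrite /F eqxx.
have nFb : ~~ F b by rewrite /F eqxx andbF.
case: i hi => [|[|[|i]]] // _; case: j hj => [|[|[|j]]] // _ /=.
- by case => /(IH t hs ht) ->.
- by case => /eqP; rewrite (negbTE ab).
- by move=> e; case: (nomix _ _ _ nFa hs e).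
- by case => /esym/eqP; rewrite (negbTE ab).
- by case => /(IH t hs ht) ->.
- by move=> e; case: (nomix _ _ _ nFb hs e).
- by move=> e; case: (nomix _ _ _ nFa ht (esym e)).
- by move=> e; case: (nomix _ _ _ nFb ht (esym e)).
- by move/catl_inj/(IH t hs ht) ->.
Qed.
End Code.

Lemma flat_map01 n (a b : 'I_n) (w u : seq 'I_n) :
  all (fun x => (x == a) || (x == b)) u ->
  concat_idx [:: [:: a]; [:: b]; w] [seq (if x == a then 0 else 1) | x <- u] = u.
Proof.
elim: u => [|x u IH] //= /andP[hx hw].
rewrite concat_cons IH //. case: eqP => [->|ne] //=.
by case/orP: hx => /eqP h; [case: ne | rewrite h].
Qed.

Lemma code_iff n (a b : 'I_n) (w : seq 'I_n) : w != [::] ->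
  is_code [:: [:: a]; [:: b]; w] <-> (a != b) && has (fun x => (x != a) && (x != b)) w.
Proof.
move=> wne; split.
- move=> hc; apply/andP; split.
  + apply/negP => /eqP eab.
    have := hc [:: 0] [:: 1] isT isT isT isT.
    by rewrite /concat_idx /= eab => /(_ erefl).
  + case: (boolP (has _ w)) => // hn; exfalso.
    have hall : all (fun x => (x == a) || (x == b)) w.
      apply/allP => x xw; move/hasPn: hn => /(_ x xw).
      by rewrite negb_and !negbK.
    set s := [seq (if x == a then 0 else 1) | x <- w].
    have sne : s != [::] by rewrite /s; case: (w) wne.
    have sall : all (fun i => i < size [:: [:: a]; [:: b]; w]) s.
      by rewrite /s all_map; apply/allP => x _ /=; case: (x == a).
    have := hc s [:: 2] sne isT sall isT.
    rewrite flat_map01 // /concat_idx /= cats0 => /(_ erefl) es.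
    have : 2 \in s by rewrite es inE.
    by rewrite /s => /mapP[x _]; case: (x == a).
- move=> /andP[ab hw] s t _ _ hs ht.
  exact: (@uniq_dec n a b w wne ab hw s t hs ht).
Qed.

Lemma prefix_iff n (a b x : 'I_n) (w : seq 'I_n) :
  is_prefix_code [:: [:: a]; [:: b]; x :: w] <->
  [&& a != b, x != a & x != b].
Proof.
split.
- move=> [_ hp].
  have h01 := hp 0 1 isT isT. have h02 := hp 0 2 isT isT.
  have h12 := hp 1 2 isT isT.
  move: h01 h02 h12 => /= [h01 _] [h02 _] [h12 _]; move: h01 h02 h12.
  rewrite !prefix0s !andbT.
  case: (a =P b) => [_ /(_ isT)|_ _] //.
  case: (a =P x) => [_ /(_ isT)|nax _] //.
  case: (b =P x) => [_ /(_ isT)|nbx _] //.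
  rewrite /= [x == a]eq_sym [x == b]eq_sym.
  by apply/andP; split; apply/eqP.
- move=> /and3P[ab xa xb]; split.
  + apply/code_iff => //; rewrite ab /= xa xb //.
  + move=> i j hi hj.
    case: i hi => [|[|[|i]]] // _; case: j hj => [|[|[|j]]] // _ /=;
      rewrite ?prefix0s ?prefixs0 ?prefix_refl ?eqxx ?andbT; split => // h; move: h;
      rewrite ?(negbTE ab) ?(eq_sym a) ?(eq_sym b) ?(negbTE xa) ?(negbTE xb) //
        ?(eq_sym b a) ?(negbTE ab) //.
Qed.

Lemma tuple1K (T : Type) (t : 1.-tuple T) : [tuple thead t] = t.
Proof. by apply: val_inj; case: t => [[|y [|]]]. Qed.

Lemma card_cons (T : finType) m (P : pred T) (R : pred (m.-tuple T)) :
  #|[pred t : m.+1.-tuple T | P (thead t) && R [tuple of behead t]]| = #|P| * #|R|.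
Proof.
pose h (p : T * m.-tuple T) : m.+1.-tuple T := [tuple of p.1 :: p.2].
pose g (t : m.+1.-tuple T) : T * m.-tuple T := (thead t, [tuple of behead t]).
have hb : bijective h.
  exists g.
  - by case=> x t; rewrite /g /h theadE; congr pair; apply: val_inj.
  - by move=> t; rewrite /g /h [in RHS](tuple_eta t); apply: val_inj.
rewrite -[LHS]sum1_card (reindex h (onW_bij _ hb)) -cardX -sum1_card.
apply: eq_bigl => -[x t] /=.
rewrite !inE /h /=.
by have -> : [tuple of behead [tuple of x :: t]] = t by apply: val_inj.
Qed.

Lemma card_all (T : finType) m (P : pred T) :
  #|[pred t : m.-tuple T | all P t]| = #|P| ^ m.
Proof.
elim: m => [|m IH].
  rewrite expn0; transitivity #|{: 0.-tuple T}|; last by rewrite card_tuple.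
  apply: eq_card => t /=; rewrite inE.
  by case: t => [[]].
rewrite expnS -IH -card_cons; apply: eq_card => t /=.
by rewrite !inE [in LHS](tuple_eta t).
Qed.

Section Bij.
Variables (n c : nat).
Local Notation L := [:: 1; 1; c].
Let T := ('I_n * 'I_n * c.-tuple 'I_n)%type.

Definition Gt (x : T) (k : nat) : (nth 0 L k).-tuple 'I_n :=
  match k as k return (nth 0 L k).-tuple 'I_n with
  | 0 => [tuple x.1.1] | 1 => [tuple x.1.2] | 2 => x.2 | k.+3 => nseq_tuple _ x.1.1 end.

Definition i0 : 'I_(size L) := @Ordinal 3 0 isT.
Definition i1 : 'I_(size L) := @Ordinal 3 1 isT.
Definition i2 : 'I_(size L) := @Ordinal 3 2 isT.

Lemma enum3 : enum 'I_(size L) = [:: i0; i1; i2].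
Proof. by apply: (inj_map val_inj); rewrite val_enum_ord. Qed.

Definition psi (x : T) : wordseq_type n L := [ffun i : 'I_3 => Gt x i].

Lemma seq_of_psi x : seq_of (psi x) = [:: [:: x.1.1]; [:: x.1.2]; val x.2].
Proof.
rewrite /seq_of.
under eq_map => i do rewrite ffunE.
by rewrite enum3.
Qed.

Lemma psi_inj : injective psi.
Proof.
move=> [[a b] w] [[a' b'] w'] /(congr1 (@seq_of n L)); rewrite !seq_of_psi /=.
by case=> -> -> /val_inj ->.
Qed.


Definition phi (f : wordseq_type n L) : T := (thead (f i0), thead (f i1), f i2).

Lemma psi_phi f : psi (phi f) = f.
Proof.
apply/ffunP => i; rewrite ffunE.
case: i => [[|[|[|k]]] Hi] //=.
- have -> : Hi = isT by exact: eq_irrelevance.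
  exact: tuple1K.
- have -> : Hi = isT by exact: eq_irrelevance.
  exact: tuple1K.
- by have -> : Hi = isT by exact: eq_irrelevance.
Qed.

Lemma card_set_psi (S : {set wordseq_type n L}) :
  #|S| = #|[set x : T | psi x \in S]|.
Proof.
rewrite -(card_imset _ psi_inj); apply: eq_card => f.
apply/idP/imsetP.
- by move=> hf; exists (phi f); rewrite ?inE psi_phi.
- by case=> x; rewrite inE => hx ->.
Qed.
End Bij.


Lemma card_dep (A W : finType) (P : pred A) (R : A -> pred W) :
  #|[pred x : A * W | P x.1 && R x.1 x.2]| = \sum_(a | P a) #|[pred w | R a w]|.
Proof.
rewrite -sum1_card.
under [RHS]eq_bigr => a _ do rewrite -sum1_card.
by rewrite pair_big_dep.
Qed.

Lemma card_ne n : #|[pred ab : 'I_n * 'I_n | ab.1 != ab.2]| = n * n.-1.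
Proof.
have := (@card_dep _ _ predT (fun a b : 'I_n => a != b)); move=> ->.
have E : forall a : 'I_n, #|[pred w | a != w]| = n.-1.
  move=> a; transitivity #|predC1 a|; first by apply: eq_card => b; rewrite !inE eq_sym.
  by rewrite cardC1 card_ord.
under eq_bigr => a _ do rewrite E.
by rewrite sum_nat_const card_ord.
Qed.

Lemma card_has n m (a b : 'I_n) : a != b ->
  #|[pred w : m.-tuple 'I_n | has (fun y => (y != a) && (y != b)) w]| = n ^ m - 2 ^ m.
Proof.
move=> ab.
have h := cardC [pred w : m.-tuple 'I_n | has (fun y => (y != a) && (y != b)) w].
rewrite card_tuple card_ord in h.
have h2 : #|[predC [pred w : m.-tuple 'I_n | has (fun y => (y != a) && (y != b)) w]]| = 2 ^ m.
  have c2 : #|[pred y : 'I_n | y \in [set a; b]]| = 2.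
    transitivity #|[set a; b]|; first by apply: eq_card.
    by rewrite cards2 ab.
  rewrite -c2 -card_all; apply: eq_card => w; rewrite !inE.
  rewrite -all_predC; apply: eq_all => y /=.
  by rewrite !inE negb_and !negbK.
by rewrite -h h2 addnK.
Qed.

Lemma card_F n (a b : 'I_n) : a != b ->
  #|[pred y : 'I_n | (y != a) && (y != b)]| = n - 2.
Proof.
move=> ab.
have h := cardC [set a; b]; rewrite cards2 ab card_ord in h.
have e : #|[pred y : 'I_n | (y != a) && (y != b)]| = #|[predC [set a; b]]|.
  by apply: eq_card => y; rewrite !inE negb_or.
by rewrite e -[in RHS]h addKn.
Qed.

Lemma card_head n m (a b : 'I_n) : a != b ->
  #|[pred w : m.+1.-tuple 'I_n | (thead w != a) && (thead w != b)]| = (n - 2) * n ^ m.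
Proof.
move=> ab.
have ct : #|{: m.-tuple 'I_n}| = n ^ m by rewrite card_tuple card_ord.
rewrite -(@card_F n a b ab) -ct.
rewrite -card_cons; apply: eq_card => w; rewrite !inE.
by rewrite andbT.
Qed.

Lemma card_dep' (A W : finType) (P : pred A) (R : A -> pred W) (S : {pred A * W}) :
  (forall a w, ((a, w) \in S) = P a && R a w) ->
  #|S| = \sum_(a | P a) #|[pred w | R a w]|.
Proof.
move=> hS; rewrite -card_dep; apply: eq_card => -[a w].
by rewrite hS.
Qed.

Lemma sum_ne_const n K (G : 'I_n * 'I_n -> nat) :
  (forall ab, ab.1 != ab.2 -> G ab = K) ->
  \sum_(ab | ab.1 != ab.2) G ab = n * n.-1 * K.
Proof.
move=> hG.
transitivity (\sum_(ab in [pred ab : 'I_n * 'I_n | ab.1 != ab.2]) K).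
  by apply: eq_big => // ab /hG.
by rewrite sum_nat_const card_ne.
Qed.

Lemma cardUD n c : #|UD n [:: 1; 1; c.+1]| = n * n.-1 * (n ^ c.+1 - 2 ^ c.+1).
Proof.
rewrite card_set_psi (@card_dep' _ _ (fun ab : 'I_n * 'I_n => ab.1 != ab.2)
   (fun (ab : 'I_n * 'I_n) (w : (c.+1).-tuple 'I_n) =>
       has (fun y => (y != ab.1) && (y != ab.2)) w)); last first.
  move=> [a b] w; rewrite !inE /=.
  apply/boolp.asboolP/idP; rewrite seq_of_psi /=.
  - by move/code_iff; apply; case: w => [[]].
  - by move/code_iff => h; apply: h; case: w => [[]].
apply: sum_ne_const => -[a b] /= ab.
exact: card_has.
Qed.

Lemma cardPR n c : #|PR n [:: 1; 1; c.+1]| = n * n.-1 * ((n - 2) * n ^ c).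
Proof.
rewrite card_set_psi (@card_dep' _ _ (fun ab : 'I_n * 'I_n => ab.1 != ab.2)
   (fun (ab : 'I_n * 'I_n) (w : (c.+1).-tuple 'I_n) =>
       (thead w != ab.1) && (thead w != ab.2))); last first.
  move=> [a b] w; rewrite !inE /=.
  case/tupleP: w => y w.
  apply/boolp.asboolP/idP; rewrite seq_of_psi /= theadE.
  - by move/prefix_iff => /and3P[-> -> ->].
  - by move=> /and3P[h1 h2 h3]; apply/prefix_iff; rewrite h1 h2 h3.
apply: sum_ne_const => -[a b] /= ab.
exact: card_head.
Qed.


Import GRing.Theory Num.Theory.
Local Open Scope ring_scope.

Theorem mainTheorem8 (n c : nat) (hn : (2 < n)%N) (hc : (1 <= c)%N) :
  rho n [:: 1%N; 1%N; c] =
  ((n%:R - 2) / n%:R) * (1 - (2%:R / n%:R) ^+ c)^-1 :> rat.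
Proof.
case: c hc => [//|c] _.
rewrite /rho cardUD cardPR.
have n2 : (2 <= n)%N by apply: ltnW.
have n1 : (1 <= n)%N by apply: leq_trans n2.
have hle : (2 ^ c.+1 <= n ^ c.+1)%N by rewrite leq_exp2r.
have hlt : (2 ^ c.+1 < n ^ c.+1)%N by rewrite ltn_exp2r.
rewrite -subn1 !natrM !natrB // !natrX.
set N : rat := n%:R.
have N0 : N != 0 by rewrite pnatr_eq0 -lt0n (leq_trans _ n2).
have N1 : N - 1 != 0 by rewrite subr_eq0 pnatr_eq1; case: (n) hn => [|[|]].
have D : N ^+ c.+1 - 2%:R ^+ c.+1 != 0.
  by rewrite -!natrX -natrB ?(ltnW hlt) // pnatr_eq0 subn_eq0 -ltnNge.
have E : 1 - (2%:R / N) ^+ c.+1 = (N ^+ c.+1 - 2%:R ^+ c.+1) / N ^+ c.+1.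
  by rewrite expr_div_n mulrBl divff ?expf_neq0.
rewrite E invf_div exprS.
field.
by rewrite -/N -exprS D N0 N1.
Qed.
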